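(* Let $\{G_i\}$ be a family of graphs with common induced subgraph $J$, embedded as $J_i\subseteq G_i$, and let $H=\amalg\{(G_i|J_i)\}$. If the diameter of $J$ is at most $2$, then every $G_i$ is isometrically embedded in $H$.
   Context: $d_G$ is shortest-path distance in $G$. $J$ is a common induced subgraph of each $G_i$ via injective maps $\iota_i:V(J)\to V(G_i)$ with $\iota_i(x)\iota_i(y)\in E(G_i)$ iff $xy\in E(J)$; $J_i$ is the induced image. $H=\amalg\{(G_i|J_i)\}$ is obtained from the disjoint union of the $G_i$ by identifying, for each $x\in V(J)$, all vertices $\iota_i(x)$ into one vertex; each $G_i$ is regarded as a subgraph of $H$. A subgraph $G$ of $H$ is isometrically embedded in $H$ if $d_G(u,v)=d_H(u,v)$ for all $u,v\in V(G)$. *)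

(* Defs.v *)
From Stdlib Require Import Arith ClassicalEpsilon.

Record sgraph := SGraph {
  vert :> Type;
  adj : vert -> vert -> Prop;
  adj_sym : forall x y, adj x y -> adj y x;
  adj_irrefl : forall x, ~ adj x x }.

Inductive walk {V : Type} (a : V -> V -> Prop) : V -> V -> nat -> Prop :=
| walk_nil : forall u, walk a u u 0
| walk_cons : forall u w v n, a u w -> walk a w v n -> walk a u v (S n).

(* is_dist a u v d : the shortest-path distance from u to v is (finite and
   equal to) d.  If no d satisfies it, the distance is infinite. *)
Definition is_dist {V : Type} (a : V -> V -> Prop) (u v : V) (d : nat) : Prop :=
  walk a u v d /\ forall n, walk a u v n -> d <= n.

Definition induced_embedding (J G : sgraph) (f : J -> G) : Prop :=
  (forall x y, f x = f y -> x = y) /\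
  (forall x y, adj G (f x) (f y) <-> adj J x y).

Definition diam_le2 (J : sgraph) : Prop :=
  forall x y : J, exists d, is_dist (adj J) x y d /\ d <= 2.

Section Amalgam.
Variables (I : Type) (J : sgraph) (G : I -> sgraph) (iota : forall i, J -> G i).

(* Vertices of H = amalg (G_i | J_i): the vertices of J (the identified
   vertices iota_i(x)), together with, for each i, the vertices of G_i
   outside J_i. *)
Inductive amalg_vert : Type :=
| AJ : vert J -> amalg_vert
| AG : forall i (v : G i), ~ (exists x, iota i x = v) -> amalg_vert.

Definition amalg_emb (i : I) (v : G i) : amalg_vert :=
  match excluded_middle_informative (exists x, iota i x = v) with
  | left h => AJ (proj1_sig (constructive_indefinite_description _ h))
  | right h => AG i v h
  end.

Definition amalg_adj (a b : amalg_vert) : Prop :=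
  exists i (u v : G i), adj (G i) u v /\ amalg_emb i u = a /\ amalg_emb i v = b.

End Amalgam.

Arguments amalg_emb {I J G} iota i v.
Arguments amalg_adj {I J G} iota a b.

(* Main.v *)
Require Import Defs.
From Stdlib Require Import Arith Lia Classical ClassicalEpsilon Eqdep.

Section Proof3.
Variables (I : Type) (J : sgraph) (G : I -> sgraph) (iota : forall i, J -> G i).
Hypothesis Hiota : forall i, induced_embedding J (G i) (iota i).

Lemma L4 j p x : amalg_emb iota j p = AJ I J G iota x -> p = iota j x.
Proof.
  unfold amalg_emb. destruct excluded_middle_informative as [h|h]; intro E.
  - inversion E; subst. destruct (constructive_indefinite_description _ h); simpl. auto.
  - discriminate.
Qed.

Lemma L3 i x : amalg_emb iota i (iota i x) = AJ I J G iota x.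
Proof.
  unfold amalg_emb. destruct excluded_middle_informative as [h|h].
  - destruct (constructive_indefinite_description _ h) as [x' e]; simpl.
    f_equal. apply (proj1 (Hiota i)); auto.
  - exfalso; apply h; eauto.
Qed.

Lemma L2 i p q : amalg_emb iota i p = amalg_emb iota i q -> p = q.
Proof.
  intro E. destruct (classic (exists x, iota i x = p)) as [[x hx]|hp].
  - subst p. rewrite L3 in E. symmetry in E. apply L4 in E. auto.
  - destruct (classic (exists x, iota i x = q)) as [[x hx]|hq].
    + subst q. rewrite L3 in E. apply L4 in E. auto.
    + unfold amalg_emb in E.
      destruct excluded_middle_informative as [h|h]; [contradiction|].
      destruct excluded_middle_informative as [h'|h']; [contradiction|].
      injection E; intros E1'; apply inj_pair2 in E1'; auto.
Qed.

Lemma L i j p q : j <> i -> amalg_emb iota j p = amalg_emb iota i q -> exists x, q = iota i x.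
Proof.
  intros ne E. destruct (classic (exists x, iota i x = q)) as [[x hx]|hq].
  - eauto.
  - unfold amalg_emb at 2 in E.
    destruct excluded_middle_informative as [h|h]; [contradiction|].
    unfold amalg_emb in E. destruct excluded_middle_informative; [discriminate|].
    inversion E. contradiction.
Qed.

Lemma amalg_sym a b : amalg_adj iota a b -> amalg_adj iota b a.
Proof.
  intros [j [u [v [h [e1 e2]]]]]. exists j, v, u. split; auto. apply adj_sym; auto.
Qed.

Lemma E1 i u w : amalg_adj iota (amalg_emb iota i u) (amalg_emb iota i w) -> adj (G i) u w.
Proof.
  intros [j [u' [w' [h [e1 e2]]]]].
  destruct (classic (j = i)) as [->|ne].
  - apply L2 in e1; apply L2 in e2; subst; auto.
  - destruct (L _ _ _ _ ne e1) as [x ->]. destruct (L _ _ _ _ ne e2) as [y ->].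
    rewrite L3 in e1, e2. apply L4 in e1; apply L4 in e2; subst.
    apply (proj2 (Hiota i)). apply (proj2 (Hiota j)). auto.
Qed.

Lemma E2 i u b : amalg_adj iota (amalg_emb iota i u) b ->
  (forall w, b <> amalg_emb iota i w) -> exists y, u = iota i y.
Proof.
  intros [j [u' [w' [h [e1 e2]]]]] out.
  destruct (classic (j = i)) as [->|ne].
  - exfalso. apply (out w'). auto.
  - eapply L; eauto.
Qed.

Lemma walk_app {V} (a : V -> V -> Prop) x y z n m :
  walk a x y n -> walk a y z m -> walk a x z (n + m).
Proof. induction 1; simpl; intros; auto. econstructor; eauto. Qed.

Lemma walk_J i x y n : walk (adj J) x y n -> walk (adj (G i)) (iota i x) (iota i y) n.
Proof.
  induction 1; [constructor|]. econstructor; eauto. apply (proj2 (Hiota i)); auto.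
Qed.

Lemma walk_H i u v n : walk (adj (G i)) u v n ->
  walk (amalg_adj iota) (amalg_emb iota i u) (amalg_emb iota i v) n.
Proof.
  induction 1; [constructor|]. econstructor; eauto. exists i, u, w; auto.
Qed.

Hypothesis HJ : diam_le2 J.

Lemma key i a b n : walk (amalg_adj iota) a b n -> forall v, b = amalg_emb iota i v ->
  (forall u, a = amalg_emb iota i u -> exists m, m <= n /\ walk (adj (G i)) u v m) /\
  ((forall u, a <> amalg_emb iota i u) ->
     exists x m, walk (adj (G i)) (iota i x) v m /\ m + 1 <= n).
Proof.
  induction 1 as [a|a w b n Hadj Hw IH]; intros v Hb.
  - subst. split.
    + intros u E. apply L2 in E. subst. exists 0; split; auto. constructor.
    + intros out. exfalso. apply (out v). auto.
  - destruct (IH v Hb) as [IH1 IH2]. split.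
    + intros u ->.
      destruct (classic (exists w', w = amalg_emb iota i w')) as [[w' ->]|wo].
      * destruct (IH1 w' eq_refl) as [m [hm hw]]. exists (S m); split; [lia|].
        econstructor; eauto. apply E1; auto.
      * assert (out : forall w', w <> amalg_emb iota i w') by (intros w' e; apply wo; eauto).
        destruct (E2 _ _ _ Hadj out) as [y ->].
        destruct (IH2 out) as [x [m [hw hm]]].
        destruct (HJ y x) as [d [[hd _] hd2]].
        exists (d + m); split; [lia|]. eapply walk_app; eauto. apply walk_J; auto.
    + intros out.
      destruct (classic (exists w', w = amalg_emb iota i w')) as [[w' ->]|wo].
        pose proof (amalg_sym _ _ Hadj) as Hs.
        destruct (E2 _ _ _ Hs (fun u e => out u e)) as [x ->].
        destruct (IH1 _ eq_refl) as [m [hm hw]]. exists x, m; split; auto; lia.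
      * assert (out2 : forall w', w <> amalg_emb iota i w') by (intros w' e; apply wo; eauto).
        destruct (IH2 out2) as [x [m [hw hm]]]. exists x, m; split; auto; lia.
Qed.

End Proof3.

Lemma exists_min (P : nat -> Prop) m : P m -> exists d, P d /\ forall n, P n -> d <= n.
Proof.
  revert P. induction m as [m IH] using lt_wf_ind. intros P Pm.
  destruct (classic (exists k, k < m /\ P k)) as [[k [hk Pk]]|no].
  - eapply IH; eauto.
  - exists m; split; auto. intros n Pn. destruct (le_lt_dec m n); auto.
    exfalso; apply no; eauto.
Qed.

Theorem lemma3 (I : Type) (J : sgraph) (G : I -> sgraph)
  (iota : forall i, J -> G i)
  (Hiota : forall i, induced_embedding J (G i) (iota i))
  (HJ : diam_le2 J) :
  forall i (u v : G i) (d : nat),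
    is_dist (adj (G i)) u v d <->
    is_dist (amalg_adj iota) (amalg_emb iota i u) (amalg_emb iota i v) d.
Proof.
  intros i u v d. split.
  - intros [hw hmin]. split.
    + apply walk_H; auto.
    + intros n hn. destruct (proj1 (key I J G iota Hiota HJ i _ _ _ hn v eq_refl) u eq_refl)
        as [m [hm hw']]. specialize (hmin _ hw'). lia.
  - intros [hw hmin].
    destruct (proj1 (key I J G iota Hiota HJ i _ _ _ hw v eq_refl) u eq_refl) as [m [hm hw']].
    destruct (exists_min (fun k => walk (adj (G i)) u v k) m hw') as [d' [hd' hmin']].
    pose proof (hmin _ (walk_H I J G iota i _ _ _ hd')).
    pose proof (hmin' _ hw').
    assert (d = d') by lia. subst. split; auto.
Qed.
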